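(* Let $a,b$ be non-negative integers with $a+b \ge 1$, and let $H_{a,b}$ be the graph defined in the context. Then \[ \lambda_3(H_{a,b}) = a+b-1 = \frac{|V(H_{a,b})|}{3}-1, \] and \[ \lim_{t \to \infty} \frac{\lambda_3\big(H_{a,b}^{[t]}\big)}{3(a+b)t} = \frac13 . \]
   Context: $\lambda_k(G)$ denotes the $k$-th largest eigenvalue (with multiplicity) of the adjacency matrix of a graph $G$. Let $v_1,\dots,v_6$ be the vertices of the 6-cycle $C_6$ in cyclic order. $H_{a,b}$ (the closed vertex multiplication of $C_6$ by $[a,b,a,b,a,b]$) is the graph obtained by replacing $v_i$ by a clique of size $a$ if $i$ is odd and of size $b$ if $i$ is even, and, for each edge $v_iv_{i+1}$ of $C_6$ (indices mod 6), joining every vertex of the clique of $v_i$ to every vertex of the clique of $v_{i+1}$; there are no other edges. Thus $|V(H_{a,b})| = 3(a+b)$. For a graph $H$ and a positive integer $t$, the closed blow-up $H^{[t]}$ is obtained by replacing each vertex of $H$ by a clique $K_t$ and each edge of $H$ by a complete bipartite graph $K_{t,t}$ between the corresponding cliques (non-adjacent vertices of $H$ give no edges). *)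

(* Defs.v *)
From HB Require Import structures.
From mathcomp Require Import all_boot all_order all_algebra.
From mathcomp Require Import all_classical all_reals all_analysis.
Set Implicit Arguments. Unset Strict Implicit. Unset Printing Implicit Defensive.
Import Order.TTheory GRing.Theory Num.Theory.
Local Open Scope ring_scope.

Definition adjmx (R : realType) (T : finType) (e : rel T) : 'M[R]_#|T| :=
  \matrix_(i, j) (e (enum_val i) (enum_val j))%:R.

Definition is_spectrum (R : realType) (n : nat) (A : 'M[R]_n) (s : seq R) : Prop :=
  sorted (fun x y => y <= x) s /\ char_poly A = \prod_(x <- s) ('X - x%:P).

(* lambda_k(A): k-th largest eigenvalue (1-based, with multiplicity). *)
Definition lambda (R : realType) (n : nat) (A : 'M[R]_n) (k : nat) : R :=
  nth 0 (xget [::] (is_spectrum A)) k.-1.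

(* The 6-cycle on 'I_6 (vertex v_{i+1} is index i). *)
Definition c6adj (i j : 'I_6) : bool :=
  ((val j == (val i).+1 %% 6) || (val i == (val j).+1 %% 6))%N.

(* Clique sizes [a,b,a,b,a,b]: v_{i+1} odd-indexed (i even) gets a. *)
Definition Hw (a b : nat) (i : 'I_6) : nat := if ~~ odd i then a else b.

Definition HV (a b : nat) : finType := {i : 'I_6 & 'I_(Hw a b i)}.

Definition Hrel (a b : nat) : rel (HV a b) :=
  fun x y => ((tag x == tag y) && (x != y)) || c6adj (tag x) (tag y).

Definition blowup (T : finType) (e : rel T) (t : nat) : rel (T * 'I_t)%type :=
  fun x y => ((x.1 == y.1) && (x.2 != y.2)) || e x.1 y.1.

Arguments adjmx R {T} e.
Arguments is_spectrum {R n} A s.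
Arguments lambda {R n} A k.
Arguments Hrel : clear implicits.
Arguments blowup {T} e t x y.

(* Main.v *)
Require Import Defs.
From HB Require Import structures.
From mathcomp Require Import all_boot all_order all_algebra.
From mathcomp Require Import all_classical all_reals all_analysis.
From mathcomp Require Import ring lra zify.
Import Order.TTheory GRing.Theory Num.Theory.
Import numFieldNormedType.Exports.
Local Open Scope classical_set_scope.
Local Open Scope ring_scope.

Fixpoint nle (m n : nat) : bool := match m, n with 0%N, _ => true | S _, 0%N => false | S m', S n' => nle m' n' end.
Lemma nleE m n : nle m n = (m <= n)%N.
Proof. by elim: m n => [|m IH] [|n] //=; rewrite IH. Qed.
Definition nbump (j l : nat) : nat := if nle j l then l.+1 else l.
Lemma nbumpE j l : nbump j l = bump j l.
Proof. by rewrite /nbump /bump nleE; case: leqP. Qed.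
Definition mnr (Rg : Type) (g : nat -> nat -> Rg) (j k l : nat) := g k.+1 (nbump j l).
Arguments mnr {Rg} g j k l : simpl never.
Lemma mnrE (Rg : Type) (g : nat -> nat -> Rg) j k l : mnr g j k l = g k.+1 (nbump j l).
Proof. by []. Qed.
Lemma det_fun (Rg : comNzRingType) n (g : nat -> nat -> Rg) :
  \det (\matrix_(k < n.+1, l < n.+1) g k l) =
  \sum_(j < n.+1) g 0%N j * ((-1) ^+ j * \det (\matrix_(k < n, l < n) mnr g j k l)).
Proof.
rewrite (expand_det_row _ ord0); apply: eq_bigr => j _.
rewrite !mxE /cofactor add0n; congr (_ * (_ * \det _)).
by apply/matrixP => k l; rewrite !mxE /mnr nbumpE.
Qed.




Definition g6 (Rg : comNzRingType) (Y A B : Rg) (k l : nat) : Rg :=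
  match k, l with
  | 0,0 => Y - A | 0,1 => - B | 0,5 => - B
  | 1,0 => - A | 1,1 => Y - B | 1,2 => - A
  | 2,1 => - B | 2,2 => Y - A | 2,3 => - B
  | 3,2 => - A | 3,3 => Y - B | 3,4 => - A
  | 4,3 => - B | 4,4 => Y - A | 4,5 => - B
  | 5,4 => - A | 5,5 => Y - B | 5,0 => - A
  | _,_ => 0 end.
Arguments g6 {Rg} Y A B k l.

Lemma det6 (Rg : comNzRingType) (Y A B : Rg) : \det (\matrix_(k < 6, l < 6) g6 Y A B k l) =
  Y^+2 * (Y - (A + B))^+2 * (Y^+2 - (A+B) * Y - 3 * A * B).
Proof.
rewrite !(@det_fun _ 5) !big_ord_recl !big_ord0 ?mnrE /= ?mul0r ?add0r ?addr0.
rewrite !(@det_fun _ 4) !big_ord_recl !big_ord0 ?mnrE /= ?mul0r ?add0r ?addr0.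
rewrite !(@det_fun _ 3) !big_ord_recl !big_ord0 ?mnrE /= ?mul0r ?add0r ?addr0.
rewrite !(@det_fun _ 2) !big_ord_recl !big_ord0 ?mnrE /= ?mul0r ?add0r ?addr0.
rewrite !(@det_fun _ 1) !big_ord_recl !big_ord0 ?mnrE /= ?mul0r ?add0r ?addr0.
rewrite !(@det_fun _ 0) !big_ord_recl !big_ord0 ?mnrE /= ?mul0r ?add0r ?addr0.
rewrite !det_mx00.
ring.
Qed.


Lemma sylvester (Rg : comNzRingType) n m (y : Rg) (U : 'M[Rg]_(n, m)) (V : 'M[Rg]_(m, n)) :
  y ^+ m * \det (y%:M - U *m V) = y ^+ n * \det (y%:M - V *m U).
Proof.
set N := block_mx (@scalar_mx _ n y) U V (@scalar_mx _ m 1).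
have e1 : block_mx (y%:M - U *m V) U 0 1%:M = N *m block_mx 1%:M 0 (- V) 1%:M.
  by rewrite mulmx_block !mulmx1 !mulmx0 !mul1mx !mulmxN !add0r subrr.
have e2 : block_mx (@scalar_mx _ n y) U 0 (y%:M - V *m U) = block_mx 1%:M 0 (- V) y%:M *m N.
  rewrite mulmx_block !mul1mx !mul0mx !addr0 mulNmx mul_scalar_mx mul_mx_scalar addNr mulmx1 mulNmx addrC.
  by [].
have d1 := congr1 determinant e1; have d2 := congr1 determinant e2.
rewrite det_ublock det1 mulr1 det_mulmx det_lblock !det1 mulr1 in d1.
rewrite det_ublock det_mulmx det_lblock det1 mul1r !det_scalar in d2.
by rewrite d1 d2 mulr1.
Qed.

Lemma c6adj_irr (k : 'I_6) : c6adj k k = false.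
Proof. by case: k => [[|[|[|[|[|[|//]]]]]] ?]. Qed.


Lemma lambda_spec (R : realType) (n : nat) (A : 'M[R]_n) (L : seq R) k :
  is_spectrum A L -> lambda A k.+1 = nth 0 L k.
Proof.
move=> hL; rewrite /lambda /=.
have [hs hc] := xgetPex [::] (ex_intro _ L hL).
have [hL1 hL2] := hL.
set s := xget _ _ in hs hc *.
have p : perm_eq s L by apply: prod_XsubC_eq; rewrite -hc hL2.
have -> // : s = L.
apply: (sorted_eq _ _ hs hL1 p).
  by move=> x y z /= h1 h2; apply: le_trans h2 h1.
by move=> x y /andP [h1 h2]; apply/eqP; rewrite eq_le h1 h2.
Qed.

Lemma path_nseq (R : realType) (x c d : R) k : c <= x -> d <= c ->
  path (fun x y => y <= x) x (nseq k c ++ [:: d]).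
Proof.
elim: k x => [|k IH] x hcx hdc /=; first by rewrite (le_trans hdc hcx).
by rewrite hcx IH.
Qed.

Section Gen.
Variables (R : realType) (T : finType) (f : T -> 'I_6) (a b : nat).
Hypothesis hw : forall k, #|[pred x | f x == k]| = Hw a b k.
Variable e : rel T.
Hypothesis he : forall x y, e x y = ((f x == f y) && (x != y)) || c6adj (f x) (f y).

Lemma card_T : #|T| = (3 * (a + b))%N.
Proof.
rewrite -sum1_card (partition_big f predT) //=.
rewrite (eq_bigr (fun k => Hw a b k)); last first.
  by move=> k _; rewrite -hw -sum1_card; apply: eq_bigl => x.
by rewrite !big_ord_recr big_ord0 /= /Hw /=; lia.
Qed.

Let n := #|T|.
Definition Qm : 'M[R]_(n, 6) := \matrix_(i, k) (f (enum_val i) == k)%:R.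
Definition Km : 'M[R]_6 := \matrix_(k, l) ((k == l) || c6adj k l)%:R.
Definition wrow : 'rV[R]_6 := \row_k (Hw a b k)%:R.

Lemma sum_ind (c : 'I_6) (F : 'I_6 -> R) : \sum_k (c == k)%:R * F k = F c.
Proof.
rewrite (bigD1 c) //= eqxx mul1r big1 ?addr0 // => k /negPf; rewrite eq_sym => ->.
by rewrite mul0r.
Qed.

Lemma QtQ : Qm^T *m Qm = diag_mx wrow.
Proof.
apply/matrixP => k l; rewrite !mxE.
rewrite (eq_bigr (fun i => ((f (enum_val i) == k) && (f (enum_val i) == l))%:R)); last first.
  by move=> i _; rewrite !mxE -natrM mulnb.
rewrite -(big_enum_val (A := predT) (fun x => ((f x == k) && (f x == l))%:R)) /=.
have [->|nkl] := eqVneq k l.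
  rewrite -natr_sum mulr1n -hw -sum1_card; congr _%:R; rewrite [RHS]big_mkcond /=.
  by apply: eq_bigr => x _; rewrite inE andbb; case: (f x == l).
rewrite /= mulr0n big1 // => x _.
by case: eqP => [->|_] //=; rewrite (negPf nkl).
Qed.

Lemma adj_decomp : adjmx R e = Qm *m Km *m Qm^T - 1.
Proof.
apply/matrixP => i j; rewrite !mxE.
under eq_bigr => l _ do rewrite !mxE.
under eq_bigr => l _ do under eq_bigr => k _ do rewrite !mxE.
under eq_bigr => l _ do rewrite sum_ind.
rewrite (eq_bigr (fun l => (f (enum_val j) == l)%:R * Km (f (enum_val i)) l)); last first.
  by move=> l _; rewrite mulrC mxE.
rewrite sum_ind !mxE he.
have [->|nij] := eqVneq i j.
  by rewrite eqxx /= c6adj_irr /= subrr eqxx.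
have nx : enum_val i != enum_val j by apply: contra nij => /eqP /enum_val_inj ->.
by rewrite nx andbT /= mulr0n subr0.
Qed.

Let Y : {poly R} := 'X + 1.

Lemma mat6 : Y%:M - map_mx polyC (Km *m diag_mx wrow) =
  \matrix_(k < 6, l < 6) g6 Y (a%:R%:P) (b%:R%:P) k l.
Proof.
apply/matrixP => k l; rewrite mul_mx_diag !mxE.
case: k l => [[|[|[|[|[|[|//]]]]]] ?] [[|[|[|[|[|[|//]]]]]] ?]; rewrite /c6adj /Hw /=.
all: by rewrite ?mulr1n ?mulr0n ?mul1r ?mul0r ?sub0r ?subr0 ?polyC0 ?oppr0.
Qed.

Lemma charY : Y^+6 * char_poly (adjmx R e) =
   Y^+n * \det (\matrix_(k < 6, l < 6) g6 Y (a%:R%:P) (b%:R%:P) k l).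
Proof.
rewrite -mat6 /char_poly /char_poly_mx adj_decomp map_mxB map_mx1 !map_mxM.
have -> : forall M : 'M[{poly R}]_n, 'X%:M - (M - 1%:M) = Y%:M - M.
  by move=> M; rewrite /Y [in RHS]raddfD /= opprB addrA.
by rewrite -mulmxA sylvester -!map_mxM -mulmxA QtQ.
Qed.

Hypothesis hab : (1 <= a + b)%N.

Lemma lambda3 : lambda (adjmx R e) 3 = (a + b)%:R - 1.
Proof.
set s : R := (a + b)%:R.
set ab : R := a%:R * b%:R.
have s0 : 0 <= s by rewrite /s ler0n.
have ab0 : 0 <= ab by rewrite /ab mulr_ge0 ?ler0n.
set dd := Num.sqrt (s ^+ 2 + 12 * ab).
have d0 : 0 <= dd by apply: sqrtr_ge0.
have d2 : dd ^+ 2 = s ^+ 2 + 12 * ab by rewrite sqr_sqrtr //; nra.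
have sd : s <= dd by nra.
set mp := (s + dd) / 2; set mm := (s - dd) / 2.
have hsum : mp + mm = s by rewrite /mp /mm; field.
have hprod : mp * mm = - (3 * ab).
  rewrite /mp /mm; have -> : (s + dd) / 2 * ((s - dd) / 2) = (s ^+ 2 - dd ^+ 2) / 4 by field.
  by rewrite d2; field.
have mps : s <= mp by rewrite /mp; lra.
have mm0 : mm <= 0 by rewrite /mm; lra.
set A : {poly R} := (a%:R)%:P; set B : {poly R} := (b%:R)%:P.
set P := mp%:P; set M := mm%:P.
have eAB : A + B = P + M by rewrite -!polyCD hsum /s natrD.
have e3 : 3 * A * B = - (P * M).
  by rewrite -polyCM hprod polyCN !polyCM polyC_natr opprK /ab mulrA.
have hc := charY.
rewrite det6 -/A -/B e3 eAB in hc.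
have Y0 : Y ^+ 6 != 0.
  rewrite expf_neq0 // /Y.
  have -> : 'X + 1 = 'X - (-1)%:P :> {poly R} by rewrite polyCN opprK.
  by rewrite polyXsubC_eq0.
have hXY : forall c : R, 'X - (c - 1)%:P = Y - c%:P.
  by move=> c; rewrite polyCB polyC1 /Y; ring.
have [ab1|ab2] := leqP (a + b) 1.
  have eab : (a + b = 1)%N by apply/eqP; rewrite eqn_leq ab1 hab.
  have n3 : n = 3%N by rewrite /n card_T eab.
  have ab00 : ab = 0.
    rewrite /ab; move: eab; case: a => [|[|//]] /=; first by rewrite mul0r.
    by case: b => [|//]; rewrite mulr0.
  have mm00 : mm = 0.
    have : mp * mm = 0 by rewrite hprod ab00 mulr0 oppr0.
    move/eqP; rewrite mulf_eq0 => /orP [/eqP mp0|/eqP //].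
    by move: mps; rewrite mp0 /s eab ler10.
  have hL : is_spectrum (adjmx R e) [:: mp - 1; s - 1; s - 1].
    split; first by rewrite /= !lexx lerD2r mps.
    apply: (mulfI Y0).
    rewrite hc !big_cons big_nil !hXY n3 /M mm00 /P /s eab.
    have mp1 : mp = 1 by rewrite -[mp]addr0 -mm00 hsum /s eab.
    by rewrite mp1 polyC0 polyC1; ring.
  by rewrite (@lambda_spec _ _ _ _ 2 hL).
have hL : is_spectrum (adjmx R e)
   ([:: mp - 1; s - 1; s - 1] ++ nseq (n - 4) (-1) ++ [:: mm - 1]).
  split.
    rewrite /= lerD2r mps lexx /=; apply: path_nseq; first by lra.
    by lra.
  apply: (mulfI Y0).
  have hX1 : 'X - (-1)%:P = Y :> {poly R} by rewrite polyCN polyC1 opprK.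
  have ePM : P + M = s%:P by rewrite /P /M -polyCD hsum.
  have hYn : Y ^+ n = Y ^+ (n - 4) * Y ^+ 4.
    by rewrite -exprD subnK // /n card_T; lia.
  rewrite hc !big_cat big_nseq iter_mulr_1 !big_cons !big_nil !hXY hX1 ePM hYn.
  rewrite -/P -/M /= -ePM; ring.
by rewrite (@lambda_spec _ _ _ _ 2 hL).
Qed.
End Gen.

Lemma fiberHV (a b : nat) (k : 'I_6) : #|[pred x : HV a b | tag x == k]| = Hw a b k.
Proof.
pose F := fun j : 'I_(Hw a b k) => (Tagged (fun i => 'I_(Hw a b i)) j : HV a b).
have inj : injective F.
  by move=> j1 j2 /(congr1 (tagged_as (F j1))); rewrite !tagged_asE.
rewrite -[RHS]card_ord -(card_codom inj); apply: eq_card => x; rewrite inE.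
apply/idP/idP.
  case: x => i j /= /eqP ?; subst i; exact: codom_f.
by move/codomP => [j ->]; rewrite /= eqxx.
Qed.

Lemma fiberBU (a b t : nat) (k : 'I_6) :
  #|[pred x : (HV a b * 'I_t)%type | tag x.1 == k]| = Hw (a * t) (b * t) k.
Proof.
rewrite (eq_card (B := [predX [pred y : HV a b | tag y == k] & 'I_t])); last by move=> [x1 x2]; rewrite !inE /= andbT.
by rewrite cardX fiberHV card_ord /Hw; case: ifP.
Qed.

Lemma heBU (a b t : nat) (x y : (HV a b * 'I_t)%type) :
  blowup (Hrel a b) t x y =
  ((tag x.1 == tag y.1) && (x != y)) || c6adj (tag x.1) (tag y.1).
Proof.
case: x y => [x1 x2] [y1 y2]; rewrite /blowup /Hrel /= xpair_eqE negb_and.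
case: (eqVneq x1 y1) => [->|ne] /=; first by rewrite eqxx.
by rewrite andbT.
Qed.


Theorem theorem2p2 (R : realType) (a b : nat) (hab : (1 <= a + b)%N) :
  lambda (adjmx R (Hrel a b)) 3 = (a + b)%:R - 1 /\
  (a + b)%:R - 1 = (#|HV a b|%:R / 3 : R) - 1 /\
  (fun t : nat =>
     lambda (adjmx R (blowup (Hrel a b) t)) 3 / (3 * (a + b) * t)%:R)
    @ \oo --> (1 / 3 : R).
Proof.
split; first exact: (@lambda3 R _ tag a b (@fiberHV a b) (Hrel a b) (fun _ _ => erefl) hab).
split.
  rewrite (@card_T _ tag a b (@fiberHV a b)) natrM mulrC mulKf //.
have L t : lambda (adjmx R (blowup (Hrel a b) t.+1)) 3 = (a * t.+1 + b * t.+1)%:R - 1.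
  apply: (@lambda3 R _ (fun x => tag x.1) _ _ (@fiberBU a b t.+1) _ (@heBU a b t.+1)).
  by rewrite -mulnDl muln_gt0 hab.
rewrite -cvg_shiftS.
set c : R := (3 * (a + b))%:R.
have c0 : c != 0 by rewrite /c pnatr_eq0 muln_eq0 negb_or /=; rewrite -lt0n hab.
have -> : (fun n => lambda (adjmx R (blowup (Hrel a b) n.+1)) 3 / (3 * (a + b) * n.+1)%:R)
    = (fun n => 1 / 3 - c^-1 * harmonic n).
  apply/funext => t; rewrite L /harmonic /= -mulnDl natrM -/c.
  have t0 : t.+1%:R != 0 :> R by rewrite pnatr_eq0.
  rewrite /c natrM in c0 *.
  have ab0 : (a + b)%:R != 0 :> R by apply: contra c0 => /eqP ->; rewrite mulr0.
  by field; rewrite addrC natr1 -natrD t0 ab0.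
have h : (fun n => 1 / 3 - c^-1 * harmonic n) @ \oo --> (1 / 3 - c^-1 * 0 : R).
  apply: cvgB; [exact: cvg_cst | exact: cvgMl_tmp cvg_harmonic].
by rewrite mulr0 subr0 in h; exact: h.
Qed.
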